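(* Let $t_0>0$, $D\ge0$, $\alpha_1,\alpha_2\in\mathbb{R}$ and $i\in\mathbb{Z}^+$ with $\alpha_1\le\alpha_2-1$ and $\alpha_2-\alpha_1\le i$. Let $F:\{-1,\dots,i\}\times[\alpha_1-1,\alpha_2]\times[t_0,\infty)\to[0,\infty)$ be such that $F(j,\alpha,t)$ is Lebesgue measurable in $t$ for each $\alpha,j$. Let $\gamma\ge0$. Assume: (1) (monotonicity) for all $j,j_1,j_2\in\{-1,\dots,i\}$ with $j_1\le j_2$, all $\beta,\beta_1,\beta_2\in[\alpha_1,\alpha_2]$ with $\beta_1\le\beta_2$, and all $t\ge t_0$: $F(j_1,\beta,t)\lesssim F(j_2,\beta,t)$ and $F(j,\beta_1,t)\lesssim F(j,\beta_2,t)$; (2) (interpolation) for all $j\in\{-1,\dots,i\}$, all $\alpha,\beta_1,\beta_2\in[\alpha_1,\alpha_2]$ with $\beta_1\le\alpha\le\beta_2$, and all $t\ge t_0$: $F(j,\alpha,t)\lesssim F(j,\beta_1,t)^{\frac{\beta_2-\alpha}{\beta_2-\beta_1}}F(j,\beta_2,t)^{\frac{\alpha-\beta_1}{\beta_2-\beta_1}}$; (3) (energy and Morawetz estimate) for all $j\in\{0,\dots,i\}$, $\alpha\in[\alpha_1,\alpha_2]$ and $t_2\ge t_1\ge t_0$: $F(j,\alpha,t_2)+\int_{t_1}^{t_2}F(j-1,\alpha-1,t)\,dt\lesssim F(j,\alpha,t_1)+Dt_1^{\alpha-\alpha_2-\gamma}$; (4) (initial decay rate) if $\gamma>0$, then for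 all $t\ge t_0$: $F(i,\alpha_2,t)\lesssim t^{-\gamma}(F(i,\alpha_2,t_0)+D)$. Then for all $j\in\{0,\dots,i\}$, all $\alpha\in[\max\{\alpha_1,\alpha_2-j\},\alpha_2]$ and all $t\ge t_0$, $$F(i-j,\alpha,t)\lesssim t^{\alpha-\alpha_2-\gamma}(F(i,\alpha_2,t_0)+D),$$ where the implicit constant may depend on $\alpha_1$ and $\alpha_2$.
   Context: $A\lesssim B$ means $A\le CB$ for a constant $C$ independent of $t,t_1,t_2$ and $D$. In the paper $t_0=10M>0$. *)

(* Defs.v *)
From HB Require Import structures.
From mathcomp Require Import all_boot all_order all_algebra.
From mathcomp Require Import all_classical all_reals all_analysis.
Set Implicit Arguments.
Unset Strict Implicit.
Unset Printing Implicit Defensive.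

(* Main.v *)
Require Import Defs.
From HB Require Import structures.
From mathcomp Require Import all_boot all_order all_algebra.
From mathcomp Require Import all_classical all_reals all_analysis.
From mathcomp Require Import measurable_realfun zify ring lra.
Import Order.TTheory GRing.Theory Num.Theory.
Local Open Scope classical_set_scope.
Local Open Scope ring_scope.

Lemma pigeon (R : realType) (f : R -> R) (u t B M : R) : u < t -> 0 <= M ->
  (forall s, u <= s <= t -> 0 <= f s) -> measurable_fun `[u,t] f ->
  (\int[lebesgue_measure]_(s in `[u,t]) (f s)%:E <= B%:E)%E -> B < M * (t - u) ->
  exists s, u <= s <= t /\ f s <= M.
Proof.
move=> ut M0 f0 mf hI hB; apply: contrapT => /forallNP H.
have H' : forall s, u <= s <= t -> M <= f s.
  move=> s hs; have := H s; move/not_andP => [//|/negP]; rewrite -ltNge; exact: ltW.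
have : (\int[lebesgue_measure]_(s in `[u,t]) (cst M%:E) s <= \int[lebesgue_measure]_(s in `[u,t]) (f s)%:E)%E.
  apply: ge0_le_integral.
  - by [].
  - by move=> x _; rewrite lee_fin.
  - exact: measurable_cst.
  - by apply/measurable_EFinP.
  - by move=> x /=; rewrite in_itv /= => hx; rewrite lee_fin; apply: H'.
rewrite integral_cst //= lebesgue_measure_itv /= lte_fin ut -EFinB -EFinM => h.
have := le_trans h hI; rewrite lee_fin => h2.
by have := lt_le_trans hB h2; rewrite ltxx.
Qed.

Lemma pow_shift (R : realType) (x y c r : R) : 0 < x -> x <= y -> y <= 2 * x ->
  0 <= c -> - c <= r -> r <= 0 -> x `^ r <= 2 `^ c * y `^ r.
Proof.
move=> x0 xy y2x c0 cr r0.
have y0 : 0 < y by apply: lt_le_trans xy.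
set q := y / x.
have hq1 : 1 <= q by rewrite /q ler_pdivlMr // mul1r.
have hq2 : q <= 2 by rewrite /q ler_pdivrMr.
have hy : y = x * q by rewrite /q mulrCA divff ?mulr1 // gt_eqF.
have q0 : 0 < q by apply: lt_le_trans hq1.
rewrite hy powRM ?(ltW x0) ?(ltW q0) //.
have h1 : q `^ (- c) <= q `^ r by apply: ler_powR.
have h2 : (2 `^ c)^-1 <= q `^ (- c).
  rewrite powRN lef_pV2 ?posrE ?powR_gt0 ?(lt_le_trans ltr01 hq1) //.
  by apply: ge0_ler_powR; rewrite ?nnegrE ?(le_trans ler01 hq1).
have h3 : 0 < 2 `^ c by rewrite powR_gt0.
rewrite mulrCA; have hx0 := powR_ge0 x r.
suff hh : 1 <= 2 `^ c * q `^ r.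
  have hh2 := ler_wpM2l hx0 hh. rewrite /= mulr1 in hh2. exact: hh2.
have := le_trans h2 h1 => h4.
by rewrite -(ler_pM2l h3) mulrV ?unitf_gt0 // in h4.
Qed.

Lemma interp (R : realType) (A t r1 r2 th1 th2 f1 f2 : R) : 0 <= A -> 0 < t ->
  0 <= th1 -> 0 <= th2 -> th1 + th2 = 1 ->
  0 <= f1 -> f1 <= A * t `^ r1 -> 0 <= f2 -> f2 <= A * t `^ r2 ->
  f1 `^ th1 * f2 `^ th2 <= A * t `^ (r1 * th1 + r2 * th2).
Proof.
move=> A0 t0 h1 h2 hs f10 f1A f20 f2A.
have e1 : f1 `^ th1 <= A `^ th1 * t `^ (r1 * th1).
  rewrite powRrM -powRM ?powR_ge0 //.
  by apply: ge0_ler_powR; rewrite ?nnegrE ?mulr_ge0 ?powR_ge0.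
have e2 : f2 `^ th2 <= A `^ th2 * t `^ (r2 * th2).
  rewrite powRrM -powRM ?powR_ge0 //.
  by apply: ge0_ler_powR; rewrite ?nnegrE ?mulr_ge0 ?powR_ge0.
apply: le_trans (ler_pM _ _ e1 e2) _; rewrite ?powR_ge0 //.
rewrite mulrACA -!powRD ?hs ?powRr1 // ?oner_eq0 // (gt_eqF t0) implybT //.
Qed.

Lemma ext1 (R : realType) (x y : R) (I : \bar R) :
  (x%:E + I <= y%:E)%E -> (0 <= I)%E -> x <= y.
Proof. by move=> h I0; rewrite -lee_fin (le_trans _ h) // leeDl. Qed.

Lemma ext2 (R : realType) (x y : R) (I : \bar R) :
  (x%:E + I <= y%:E)%E -> 0 <= x -> (I <= y%:E)%E.
Proof. by move=> h x0; rewrite (le_trans _ h) // leeDr // lee_fin. Qed.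

Lemma lemulL (R : realType) (c x y : R) : 0 <= c -> x <= y -> c * x <= c * y.
Proof. by move=> c0 xy; apply: ler_wpM2l. Qed.

Lemma lemulR (R : realType) (c x y : R) : 0 <= c -> x <= y -> x * c <= y * c.
Proof. by move=> c0 xy; apply: ler_wpM2r. Qed.

Arguments pigeon {R}.
Arguments pow_shift {R}.
Arguments interp {R}.
Arguments ext1 {R}.
Arguments ext2 {R}.
Arguments lemulL {R}.
Arguments lemulR {R}.

Ltac prune := repeat match goal with H : forall _ : _, _ |- _ => clear H end.
Ltac plra := prune; lra.
Ltac plia := prune; lia.
Theorem lemma5p2 (R : realType) (t0 al1 al2 : R) (i : nat) (g C : R) :
  0 < t0 -> (0 < i)%N -> al1 <= al2 - 1 -> al2 - al1 <= i%:R ->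
  0 <= g -> 0 < C ->
  exists C' : R, forall (D : R) (F : int -> R -> R -> R),
    0 <= D ->
    (* F maps {-1..i} x [al1-1, al2] x [t0, oo) into [0, oo) *)
    (forall (j : int) (a t : R), -1 <= j <= i%:Z -> al1 - 1 <= a <= al2 ->
       t0 <= t -> 0 <= F j a t) ->
    (* Lebesgue measurability in t *)
    (forall (j : int) (a : R), -1 <= j <= i%:Z -> al1 - 1 <= a <= al2 ->
       measurable_fun `[t0, +oo[ (F j a)) ->
    (* (1) monotonicity *)
    (forall (j1 j2 : int) (b t : R), -1 <= j1 -> j1 <= j2 -> j2 <= i%:Z ->
       al1 <= b <= al2 -> t0 <= t -> F j1 b t <= C * F j2 b t) ->
    (forall (j : int) (b1 b2 t : R), -1 <= j <= i%:Z ->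
       al1 <= b1 -> b1 <= b2 -> b2 <= al2 -> t0 <= t ->
       F j b1 t <= C * F j b2 t) ->
    (* (2) interpolation *)
    (forall (j : int) (a b1 b2 t : R), -1 <= j <= i%:Z ->
       al1 <= b1 -> b1 <= a -> a <= b2 -> b2 <= al2 -> b1 < b2 -> t0 <= t ->
       F j a t <= C * (F j b1 t `^ ((b2 - a) / (b2 - b1))
                       * F j b2 t `^ ((a - b1) / (b2 - b1)))) ->
    (* (3) energy and Morawetz estimate *)
    (forall (j : int) (a t1 t2 : R), 0 <= j <= i%:Z -> al1 <= a <= al2 ->
       t0 <= t1 -> t1 <= t2 ->
       ((F j a t2)%:E
        + \int[lebesgue_measure]_(t in `[t1, t2]) (F (j - 1) (a - 1) t)%:E
        <= (C * (F j a t1 + D * t1 `^ (a - al2 - g)))%:E)%E) ->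
    (* (4) initial decay rate *)
    (0 < g -> forall t : R, t0 <= t ->
       F i%:Z al2 t <= C * (t `^ (- g) * (F i%:Z al2 t0 + D))) ->
    (* conclusion *)
    forall (j : nat), (j <= i)%N ->
    forall a : R, Num.max al1 (al2 - j%:R) <= a -> a <= al2 ->
    forall t : R, t0 <= t ->
      F (i%:Z - j%:Z) a t <= C' * (t `^ (a - al2 - g) * (F i%:Z al2 t0 + D)).
Proof.
move=> t0p ip al12 ali g0 Cp.
pose c := al2 - al1 + g.
pose P := 2 `^ c.
pose KA := fun k : R => C * P * (C * C * k * t0 + 1) + C * P * (C * (k + 1) + 1).
pose K := fix K (j : nat) : R :=
  if j is j'.+1 then K j' + KA (K j') + C * K j' + C * (KA C + C * C) else C.
exists (K i).
move=> D F D0 F0 Fm M1 M2 I2 E3 H4.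
set X := F i%:Z al2 t0 + D.
have P0 : 0 < P by rewrite powR_gt0.
have c0 : 0 <= c by rewrite /c; plra.
have KA0 : forall k, 0 <= k -> 0 <= KA k.
  move=> k k0; have hC := ltW Cp; have hP := ltW P0.
  have q1 : 0 <= C*C*k*t0 := mulr_ge0 (mulr_ge0 (mulr_ge0 hC hC) k0) (ltW t0p).
  have q2 : 0 <= C*(k+1) := mulr_ge0 hC (addr_ge0 k0 ler01).
  have q3 : 0 <= C*P := mulr_ge0 hC hP.
  rewrite /KA; apply: addr_ge0; apply: mulr_ge0 => //; plra.
have KS : forall j, K j.+1 = K j + KA (K j) + C * K j + C * (KA C + C * C) by [].
have K0 : forall j, 0 <= K j.
  elim=> [|j IH]; first exact: ltW.
  rewrite KS; have := KA0 _ IH; have := mulr_ge0 (ltW Cp) IH.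
  have := mulr_ge0 (ltW Cp) (addr_ge0 (KA0 _ (ltW Cp)) (mulr_ge0 (ltW Cp) (ltW Cp))).
  plra.
have Kmono : forall j k, (j <= k)%N -> K j <= K k.
  move=> j k /subnKC <-; elim: (k - j)%N => [|n IH]; first by rewrite addn0.
  rewrite addnS KS; apply: le_trans IH _.
  have h1 := KA0 _ (K0 (j + n)%N).
  have h2 := mulr_ge0 (ltW Cp) (K0 (j + n)%N).
  have h3 := mulr_ge0 (ltW Cp) (addr_ge0 (KA0 _ (ltW Cp)) (mulr_ge0 (ltW Cp) (ltW Cp))).
  plra.
have X0 : 0 <= X.
  rewrite /X addr_ge0 // F0 //; [plia | plra].
have DX : D <= X.
  have : 0 <= F i%:Z al2 t0 by apply: F0 => //; [plia | plra].
  rewrite /X; plra.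
have H3r : forall (j : int) a t1 t2, 0 <= j <= i%:Z -> al1 <= a <= al2 ->
    t0 <= t1 -> t1 <= t2 -> F j a t2 <= C * (F j a t1 + D * t1 `^ (a - al2 - g)).
  move=> j a t1 t2 hj ha h1 h2.
  apply: ext1 (E3 j a t1 t2 hj ha h1 h2) _.
  apply: integral_ge0 => s /=; rewrite in_itv /= => /andP[s1 s2]; rewrite lee_fin.
  apply: F0; [move: hj; clear; plia | move/andP: ha => [ha1 ha2]; apply/andP; split; plra | exact: le_trans s1].
have H3i : forall (j : int) a t1 t2, 0 <= j <= i%:Z -> al1 <= a <= al2 ->
    t0 <= t1 -> t1 <= t2 ->
    (\int[lebesgue_measure]_(t in `[t1, t2]) (F (j - 1) (a - 1) t)%:E
       <= (C * (F j a t1 + D * t1 `^ (a - al2 - g)))%:E)%E.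
  move=> j a t1 t2 hj ha h1 h2.
  apply: ext2 (E3 j a t1 t2 hj ha h1 h2) _.
  apply: F0; [move: hj; clear; plia | move/andP: ha => [ha1 ha2]; apply/andP; split; plra | exact: le_trans h1 h2].
have hC := ltW Cp.
have base : forall a, Num.max al1 (al2 - 0%:R) <= a -> a <= al2 ->
    forall t, t0 <= t -> F (i%:Z - 0%:Z) a t <= K 0%N * (t `^ (a - al2 - g) * X).
  move=> a ha1 ha2 t ht.
  have ea : a = al2.
    by move: ha1; rewrite ge_max subr0 => /andP[_ h]; apply/le_anti; rewrite ha2 h.
  rewrite ea subr0 subrr sub0r /=.
  case: (ltP 0 g) => [gp | gn].
  - exact: H4 gp t ht.
  - have gz : g = 0 by plra.
    rewrite gz oppr0 powRr0 mul1r.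
    have := H3r i%:Z al2 t0 t _ _ (le_refl _) ht.
    rewrite gz subrr subr0 powRr0 mulr1; apply.
    + by apply/andP; split => //; clear; plia.
    + by apply/andP; split => //; plra.
have step : forall j, (j.+1 <= i)%N ->
  (forall a, Num.max al1 (al2 - j%:R) <= a -> a <= al2 -> forall t, t0 <= t ->
     F (i%:Z - j%:Z) a t <= K j * (t `^ (a - al2 - g) * X)) ->
  forall a, Num.max al1 (al2 - j.+1%:R) <= a -> a <= al2 - 1 -> forall t, t0 <= t ->
     F (i%:Z - j.+1%:Z) a t <= KA (K j) * (t `^ (a - al2 - g) * X).
  move=> j hj IH a ha1 ha2 t ht.
  move: ha1; rewrite ge_max -natr1 => /andP[ha1 ha3].
  have hb : Num.max al1 (al2 - j%:R) <= a + 1 by rewrite ge_max; apply/andP; split; plra.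
  have hb2 : a + 1 <= al2 by plra.
  set e := a - al2 - g.
  have he1 : - c <= e by rewrite /e /c; plra.
  have he2 : e <= 0 by rewrite /e; plra.
  have hidx : i%:Z - j.+1%:Z = (i%:Z - j%:Z) - 1 by clear; plia.
  have hij : 0 <= i%:Z - j%:Z <= i%:Z by move: hj; clear; plia.
  have hij1 : 0 <= i%:Z - j.+1%:Z <= i%:Z by move: hj; clear; plia.
  have haa : al1 <= a <= al2 by apply/andP; split; plra.
  have hab : al1 <= a + 1 <= al2 by apply/andP; split; plra.
  have hKj := K0 j.
  have eE : a + 1 - al2 - g = e + 1 by rewrite /e; plra.
  case: (leP (2 * t0) t) => ht2.
  + set u := t / 2.
    have u0 : t0 <= u by rewrite /u ler_pdivlMr //; plra.
    have up : 0 < u by apply: lt_le_trans u0.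
    have t2u : t = 2 * u by rewrite /u mulrC divfK // pnatr_eq0.
    have ut : u < t by plra.
    have IHu := IH (a+1) hb hb2 u u0. rewrite eE in IHu.
    have Hint := H3i (i%:Z - j%:Z) (a+1) u t hij hab u0 (ltW ut).
    rewrite eE addrK -hidx in Hint.
    set B := C * (K j + 1) * (u `^ (e+1) * X).
    have hB : C * (F (i%:Z - j%:Z) (a + 1) u + D * u `^ (e + 1)) <= B.
      have q1 : D * u `^ (e+1) <= X * u `^ (e+1) := ler_wpM2r (powR_ge0 _ _) DX.
      rewrite /B.
      have -> : C * (K j + 1) * (u `^ (e + 1) * X) = C * (K j * (u `^ (e + 1) * X) + X * u `^ (e+1)) by ring.
      apply: lemulL _ _ _ hC _; plra.
    apply/ler_addgt0Pr => d d0.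
    set M := C * (K j + 1) * (u `^ e * X) + d / C.
    have hue : u `^ (e+1) = u `^ e * u.
      by rewrite powRD ?powRr1 ?(ltW up) // (gt_eqF up) implybT.
    have dC : 0 < d / C by apply: divr_gt0.
    have hM0 : 0 <= M.
      rewrite /M; apply: addr_ge0; last exact: ltW.
      apply: mulr_ge0; [apply: mulr_ge0 => //; plra | exact: mulr_ge0 (powR_ge0 _ _) X0].
    have hMB : B < M * (t - u).
      have -> : t - u = u by plra.
      have := mulr_gt0 dC up.
      rewrite /B /M hue; plra.
    have mF : measurable_fun `[u, t] (F (i%:Z - j.+1%:Z) a).
      apply: (measurable_funS _ _ (Fm _ _ _ _)).
      - exact: measurable_itv.
      - move=> x /=; rewrite !in_itv /= andbT => /andP[h1 _]; exact: le_trans h1.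
      - by move: hij1; clear; plia.
      - by apply/andP; split; plra.
    have Fnn : forall s, u <= s <= t -> 0 <= F (i%:Z - j.+1%:Z) a s.
      move=> s /andP[s1 _]; apply: F0; [by move: hij1; clear; plia | by apply/andP; split; plra | exact: le_trans s1].
    have [s [hs hsM]] := pigeon _ _ _ _ _ ut hM0 Fnn mF (le_trans Hint (eqbRL (lee_fin _ _) hB)) hMB.
    move/andP: hs => [hs1 hs2].
    have hFt := H3r (i%:Z - j.+1%:Z) a s t hij1 haa (le_trans u0 hs1) hs2.
    have q_u : u `^ e <= P * t `^ e by apply: pow_shift => //; [exact: ltW | plra].
    have q_s : s `^ e <= P * t `^ e.
      by apply: pow_shift => //; [exact: lt_le_trans hs1 | plra].
    have f1 : C * F (i%:Z - j.+1%:Z) a s <= C * M := lemulL _ _ _ hC hsM.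
    have f2 : C * (d / C) = d by rewrite mulrC divfK // gt_eqF.
    have hCCK : 0 <= C * C * (K j + 1) by apply: mulr_ge0; [exact: mulr_ge0 | plra].
    have f3 : C * C * (K j + 1) * (u `^ e * X) <= C * C * (K j + 1) * (P * t `^ e * X).
      exact: lemulL _ _ _ hCCK (lemulR _ _ _ X0 q_u).
    have f4 : C * (D * s `^ e) <= C * (X * (P * t `^ e)).
      exact: lemulL _ _ _ hC (ler_pM D0 (powR_ge0 _ _) DX q_s).
    have f5 : 0 <= C * P * (C * C * K j * t0 + 1) * (t `^ e * X).
      apply: mulr_ge0; last exact: mulr_ge0 (powR_ge0 _ _) X0.
      apply: mulr_ge0; first exact: mulr_ge0 hC (ltW P0).
      have : 0 <= C * C * K j * t0 by apply: mulr_ge0 (ltW t0p); apply: mulr_ge0 => //; exact: mulr_ge0.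
      plra.
    rewrite /KA /M in f1 *; plra.
  + have hFt := H3r (i%:Z - j.+1%:Z) a t0 t hij1 haa (le_refl _) ht.
    have m1 : F (i%:Z - j.+1%:Z) a t0 <= C * F (i%:Z - j%:Z) a t0.
      apply: M1 => //; [by move: hij1; clear; plia | by move: hij; clear; plia | by move: hij; clear; plia].
    have m2 : F (i%:Z - j%:Z) a t0 <= C * F (i%:Z - j%:Z) (a + 1) t0.
      apply: M2 => //; [by move: hij; clear; plia | plra].
    have ih0 := IH (a+1) hb hb2 t0 (le_refl _). rewrite eE in ih0.
    have h0e : t0 `^ (e+1) = t0 `^ e * t0.
      by rewrite powRD ?powRr1 ?(ltW t0p) // (gt_eqF t0p) implybT.
    have q0 : t0 `^ e <= P * t `^ e by apply: pow_shift => //; plra.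
    have hCC : 0 <= C * C := mulr_ge0 hC hC.
    have hCCC : 0 <= C * C * C := mulr_ge0 hCC hC.
    have g1 := lemulL _ _ _ hC m1.
    have g2 := lemulL _ _ _ hCC m2.
    have g3 := lemulL _ _ _ hCCC ih0.
    have g4 : K j * (t0 `^ e * t0 * X) <= K j * (P * t `^ e * t0 * X).
      apply: lemulL _ _ _ hKj _; apply: lemulR _ _ _ X0 _; exact: lemulR _ _ _ (ltW t0p) q0.
    have g5 := lemulL _ _ _ hCCC g4.
    have g6 : C * (D * t0 `^ e) <= C * (X * (P * t `^ e)).
      exact: lemulL _ _ _ hC (ler_pM D0 (powR_ge0 _ _) DX q0).
    have f6 : 0 <= C * P * (C * (K j + 1) + 1) * (t `^ e * X).
      apply: mulr_ge0; last exact: mulr_ge0 (powR_ge0 _ _) X0.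
      apply: mulr_ge0; first exact: mulr_ge0 hC (ltW P0).
      have : 0 <= C * (K j + 1) by apply: mulr_ge0 => //; plra.
      plra.
    rewrite h0e in g3.
    rewrite /KA; plra.
have main : forall j, (j <= i)%N -> forall a, Num.max al1 (al2 - j%:R) <= a -> a <= al2 ->
    forall t, t0 <= t -> F (i%:Z - j%:Z) a t <= K j * (t `^ (a - al2 - g) * X).
  elim=> [_|j IH hj]; first exact: base.
  have IHj := IH (ltnW hj).
  move=> a ha1 ha2 t ht.
  have hY : 0 <= t `^ (a - al2 - g) * X := mulr_ge0 (powR_ge0 _ _) X0.
  have hKj := K0 j.
  have hCK : 0 <= C * K j := mulr_ge0 hC hKj.
  have hKAj := KA0 _ hKj.
  have hlast : 0 <= C * (KA C + C * C) by apply: mulr_ge0 => //; apply: addr_ge0; [exact: KA0 | exact: mulr_ge0].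
  case: (lerP a (al2 - 1)) => hal.
  - apply: le_trans (step j hj IHj a ha1 hal t ht) _; apply: lemulR _ _ _ hY _.
    rewrite KS; plra.
  - move: ha1; rewrite ge_max => /andP[ha1 ha3].
    case: j IH IHj hj ha3 hKj hCK hKAj => [|j] IH IHj hj ha3 hKj hCK hKAj.
    + have hrng : -1 <= i%:Z - 1%:Z <= i%:Z by clear; plia.
      have hlt : al2 - 1 < al2 by plra.
      have hI := I2 (i%:Z - 1%:Z) a (al2 - 1) al2 t hrng al12 (ltW hal) ha2 (le_refl _) hlt ht.
      have e1 : al2 - (al2 - 1) = 1 by ring.
      rewrite e1 !divr1 in hI.
      have hm1 : Num.max al1 (al2 - 1%:R) <= al2 - 1 by rewrite ge_max; apply/andP; split; plra.
      have f1 := step 0%N ip base (al2 - 1) hm1 (le_refl _) t ht.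
      have f2a : F (i%:Z - 1%:Z) al2 t <= C * F i%:Z al2 t.
        apply: M1 => //; [by move: ip; clear; plia | by clear; plia | by apply/andP; split; plra].
      have hm2 : Num.max al1 (al2 - 0%:R) <= al2 by rewrite ge_max; apply/andP; split; plra.
      have f2b := base al2 hm2 (le_refl _) t ht.
      rewrite subr0 in f2b.
      set A := (KA C + C * C) * X.
      set r1 := al2 - 1 - al2 - g.
      set r2 := al2 - al2 - g.
      have hA : 0 <= A by apply: mulr_ge0 => //; apply: addr_ge0; [exact: KA0 | exact: mulr_ge0].
      have hq := interp A t r1 r2 (al2 - a) (a - (al2 - 1))
        (F (i%:Z - 1%:Z) (al2 - 1) t) (F (i%:Z - 1%:Z) al2 t) hA.
      have tp : 0 < t by apply: lt_le_trans ht.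
      have hT1 := powR_ge0 t r1.
      have hT2 := powR_ge0 t r2.
      have hKC := KA0 _ hC.
      have hCC := mulr_ge0 hC hC.
      have Fa : 0 <= F (i%:Z - 1%:Z) (al2 - 1) t.
        by apply: F0; [by clear; plia | by apply/andP; split; plra | exact: ht].
      have Fb : 0 <= F (i%:Z - 1%:Z) al2 t.
        by apply: F0; [by clear; plia | by apply/andP; split; plra | exact: ht].
      have b1 : F (i%:Z - 1%:Z) (al2 - 1) t <= A * t `^ r1.
        change (K 0%N) with C in f1.
        have := mulr_ge0 (mulr_ge0 hCC X0) hT1.
        rewrite /A; move: f1; clear -hKC; plra.
      have b2 : F (i%:Z - 1%:Z) al2 t <= A * t `^ r2.
        change (K 0%N) with C in f2b.
        have g1 := lemulL _ _ _ hC f2b.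
        have := mulr_ge0 (mulr_ge0 hKC X0) hT2.
        rewrite /A; move: f2a g1; clear; plra.
      have hprod := hq tp _ _ _ Fa b1 Fb b2.
      have ex : r1 * (al2 - a) + r2 * (a - (al2 - 1)) = a - al2 - g.
        by rewrite /r1 /r2; ring.
      rewrite ex in hprod.
      have hY2 : 0 <= t `^ (a - al2 - g) * X := mulr_ge0 (powR_ge0 _ _) X0.
      apply: le_trans hI _.
      apply: le_trans (lemulL _ _ _ hC (hprod _ _ _)) _.
      - by plra.
      - by plra.
      - by ring.
      have z1 := mulr_ge0 (K0 0%N) hY2.
      have z2 := mulr_ge0 (KA0 _ (K0 0%N)) hY2.
      have z3 := mulr_ge0 (mulr_ge0 hC (K0 0%N)) hY2.
      rewrite [K 1%N]KS /A.
      move: z1 z2 z3; clear; plra.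
    + have m : F (i%:Z - j.+2%:Z) a t <= C * F (i%:Z - j.+1%:Z) a t.
        apply: M1 => //; [by move: hj; clear; plia | by clear; plia | by clear; plia | by apply/andP; split; plra].
      have ih := IHj a _ ha2 t ht.
      have : F (i%:Z - j.+1%:Z) a t <= K j.+1 * (t `^ (a - al2 - g) * X).
        apply: ih; rewrite ge_max; apply/andP; split => //.
        have : 1 <= j.+1%:R :> R by rewrite ler1n.
        plra.
      move/(lemulL _ _ _ hC) => h.
      apply: le_trans (le_trans m h) _.
      rewrite mulrA; apply: lemulR _ _ _ hY _.
      have := K0 j.+1; rewrite [K j.+2]KS; plra.
move=> j hj a ha1 ha2 t ht.
apply: le_trans (main j hj a ha1 ha2 t ht) _.
apply: lemulR _ _ _ (mulr_ge0 (powR_ge0 _ _) X0) _; exact: Kmono.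
Qed.
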